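(* The metric space $(\mathrm{Conf}^{lf}_\infty(\mathbb C),d_{\Sigma})$ is path-connected.
   Context: $\mathrm{Conf}^{lf}_\infty(\mathbb C)$ is the set of sequences $(x_j)_{j\ge1}$ of pairwise distinct complex numbers such that $\{j:|x_j|\le R\}$ is finite for all $R>0$, with metric $d_{\Sigma}(x,y)=\sum_j2^{-j}\min\{|x_j-y_j|,1\}+d_{\mathcal V}(P(x),P(y))$, where $P(x)=\{x_j\}$ and $d_{\mathcal V}$ is the vague metric $d_{\mathcal V}(A,B)=\sum_j 2^{-j}\frac{|\sum_{a\in A}\varphi_j(a)-\sum_{b\in B}\varphi_j(b)|}{1+|\sum_{a\in A}\varphi_j(a)-\sum_{b\in B}\varphi_j(b)|}$ for a fixed sequence $(\varphi_j)$ of compactly supported continuous real functions such that for each $m$ those supported in $\{|z|\le m\}$ are sup-norm dense among such functions supported in $\{|z|\le m\}$. *)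

(* Defs.v *)
From Stdlib Require Import Reals.
From Coquelicot Require Import Coquelicot.
Open Scope R_scope.

(* Sequences are indexed by nat starting at 0; the paper's x_j (j >= 1)
   is our x (j-1), so the weight 2^{-j} becomes (1/2)^(j+1). *)

Definition Conf_lf (x : nat -> C) : Prop :=
  (forall i j : nat, x i = x j -> i = j) /\
  (forall Rr : R, 0 < Rr -> exists N : nat, forall j : nat, Cmod (x j) <= Rr -> (j < N)%nat).

Definition compact_support (f : C -> R) : Prop :=
  exists M : R, forall z : C, M < Cmod z -> f z = 0.

Definition Cc (f : C -> R) : Prop :=
  (forall z : C, continuous f z) /\ compact_support f.

Definition supported_in (m : R) (f : C -> R) : Prop :=
  forall z : C, m < Cmod z -> f z = 0.

Definition vague_seq (phi : nat -> C -> R) : Prop :=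
  (forall j, Cc (phi j)) /\
  (forall m : nat, forall f : C -> R,
      Cc f -> supported_in (INR m) f ->
      forall eps : R, 0 < eps ->
        exists j : nat, supported_in (INR m) (phi j) /\
          forall z : C, Rabs (phi j z - f z) < eps).

(* sum_{a in P(x)} f(a); since the x_k are pairwise distinct and the
   configuration is locally finite, this is the (finitely supported) series
   sum_k f(x_k). *)
Definition sum_conf (f : C -> R) (x : nat -> C) : R :=
  Series (fun k => f (x k)).

Definition d_V (phi : nat -> C -> R) (x y : nat -> C) : R :=
  Series (fun j =>
    (/2) ^ (S j) *
      (Rabs (sum_conf (phi j) x - sum_conf (phi j) y) /
       (1 + Rabs (sum_conf (phi j) x - sum_conf (phi j) y)))).

Definition d_Sigma (phi : nat -> C -> R) (x y : nat -> C) : R :=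
  Series (fun j => (/2) ^ (S j) * Rmin (Cmod (Cminus (x j) (y j))) 1)
  + d_V phi x y.

Definition path_connected_Conf (phi : nat -> C -> R) : Prop :=
  forall x y : nat -> C, Conf_lf x -> Conf_lf y ->
    exists gamma : R -> nat -> C,
      (forall t : R, 0 <= t <= 1 -> Conf_lf (gamma t)) /\
      gamma 0 = x /\ gamma 1 = y /\
      (forall t : R, 0 <= t <= 1 -> forall eps : R, 0 < eps ->
         exists delta : R, 0 < delta /\
           forall s : R, 0 <= s <= 1 -> Rabs (s - t) < delta ->
             d_Sigma phi (gamma s) (gamma t) < eps).

(* Main.v *)
Require Import Defs.
From Stdlib Require Import Reals Lra Lia Arith FunctionalExtensionality Cantor.
From Coquelicot Require Import Coquelicot.
Open Scope R_scope.

Lemma is_series_zero : is_series (fun _ : nat => 0) 0.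
Proof.
  assert (H := is_series_geom (/2)).
  assert (H' : Rabs (/2) < 1) by (rewrite Rabs_pos_eq; lra).
  specialize (H H').
  apply (is_series_scal_l 0) in H.
  unfold scal in H; simpl in H; unfold mult in H; simpl in H.
  rewrite Rmult_0_l in H.
  eapply is_series_ext; [|exact H].
  intros n; simpl. unfold scal; simpl. unfold mult; simpl. ring.
Qed.

Lemma is_series_fin (a : nat -> R) (N : nat) :
  (forall k, (N < k)%nat -> a k = 0) -> is_series a (sum_f_R0 a N).
Proof.
  intros H.
  apply (is_series_decr_n a (S N)); [lia|].
  simpl pred. rewrite sum_n_Reals.
  match goal with |- is_series _ ?l => replace l with 0 end.
  2:{ unfold plus, opp; simpl. ring. }
  eapply is_series_ext; [|exact is_series_zero].
  intros n; simpl. rewrite H; auto. lia.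
Qed.

Lemma Series_fin (a : nat -> R) (N : nat) :
  (forall k, (N < k)%nat -> a k = 0) -> Series a = sum_f_R0 a N.
Proof. intros H. apply is_series_unique, is_series_fin, H. Qed.

Lemma Series_half : Series (fun n => (/2)^(S n)) = 1.
Proof.
  assert (H := is_series_geom (/2)).
  assert (H' : Rabs (/2) < 1) by (rewrite Rabs_pos_eq; lra).
  specialize (H H').
  apply (is_series_scal_l (/2)) in H.
  apply is_series_unique.
  unfold scal in H; simpl in H; unfold mult in H; simpl in H.
  replace 1 with (/ 2 * / (1 - / 2)) by field.
  eapply is_series_ext; [|exact H].
  intros n; simpl. reflexivity.
Qed.

Lemma ex_half : ex_series (fun n => (/2)^(S n)).
Proof.
  assert (H := ex_series_geom (/2)).
  assert (H' : Rabs (/2) < 1) by (rewrite Rabs_pos_eq; lra).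
  specialize (H H').
  apply (ex_series_scal_l (/2)) in H.
  eapply ex_series_ext; [|exact H]. intros n; reflexivity.
Qed.

Lemma pow_half_pos n : 0 < (/2)^n.
Proof. apply pow_lt. lra. Qed.

Lemma is_half : is_series (fun n => (/2)^(S n)) 1.
Proof. rewrite <- Series_half. apply Series_correct, ex_half. Qed.

Lemma series_small (a : nat -> R) (J : nat) (e : R) :
  0 <= e ->
  (forall n, 0 <= a n <= (/2)^(S n)) ->
  (forall n, (n < J)%nat -> a n <= (/2)^(S n) * e) ->
  Series a <= e + (/2)^J.
Proof.
  intros He H1 H2.
  set (c := fun n => if le_lt_dec J n then (/2)^(S n) else 0).
  assert (Hc : is_series c ((/2)^J)).
  { assert (Ht : is_series (fun k => c (J + k)%nat) ((/2)^J)).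
    { assert (H := is_half). apply (is_series_scal_l ((/2)^J)) in H.
      unfold scal in H; simpl in H; unfold mult in H; simpl in H.
      rewrite Rmult_1_r in H.
      eapply is_series_ext; [|exact H].
      intros n. unfold c. destruct (le_lt_dec J (J+n)); [|lia].
      rewrite <- tech_pow_Rmult, pow_add, <- Rmult_assoc, (Rmult_comm ((/2)^J)), Rmult_assoc. reflexivity. }
    destruct J as [|J].
    - eapply is_series_ext; [|exact Ht]. intros n; reflexivity.
    - apply (is_series_decr_n c (S J)); [lia|].
      simpl pred. rewrite sum_n_Reals.
      assert (Hz : sum_f_R0 c J = 0).
      { clear Ht. assert (forall m, (m <= J)%nat -> sum_f_R0 c m = 0).
        { induction m; intros Hm; simpl.
          - unfold c. destruct (le_lt_dec (S J) 0); [lia|]. reflexivity.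
          - rewrite IHm by lia. unfold c. destruct (le_lt_dec (S J) (S m)); [lia|]. ring. }
        apply H; lia. }
      rewrite Hz.
      match goal with |- is_series _ ?l => replace l with ((/2)^(S J)) end.
      2:{ unfold plus, opp; simpl. ring. }
      exact Ht. }
  set (b := fun n => e * (/2)^(S n) + c n).
  assert (Hb : is_series b (e * 1 + (/2)^J)).
  { apply (is_series_plus (fun n => e * (/2)^(S n)) c).
    - assert (H := is_half). apply (is_series_scal_l e) in H. exact H.
    - exact Hc. }
  replace (e + (/2)^J) with (Series b).
  2:{ rewrite (is_series_unique _ _ Hb). ring. }
  apply Series_le.
  2:{ eexists; exact Hb. }
  intros n. split; [apply H1|].
  unfold b, c. destruct (le_lt_dec J n).
  - assert (0 <= e * (/2)^(S n)) by (apply Rmult_le_pos; [lra| left; apply pow_half_pos]).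
    specialize (H1 n). lra.
  - rewrite Rplus_0_r, Rmult_comm. apply H2. exact l.
Qed.

Definition good (g : R -> nat -> C) : Prop :=
  (forall t, 0 <= t <= 1 -> forall i j, g t i = g t j -> i = j) /\
  (forall M, exists N, forall t, 0 <= t <= 1 -> forall k, (N <= k)%nat -> M < Cmod (g t k)) /\
  (forall k t, 0 <= t <= 1 -> forall eps, 0 < eps -> exists delta, 0 < delta /\
     forall s, 0 <= s <= 1 -> Rabs (s - t) < delta -> Cmod (Cminus (g s k) (g t k)) < eps).

Lemma finite_delta (t : R) (J : nat) (Q : nat -> R -> Prop) :
  (forall j, (j < J)%nat -> exists d, 0 < d /\ forall s, 0 <= s <= 1 -> Rabs (s - t) < d -> Q j s) ->
  exists d, 0 < d /\ forall j, (j < J)%nat -> forall s, 0 <= s <= 1 -> Rabs (s - t) < d -> Q j s.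
Proof.
  induction J; intros H.
  - exists 1. split; [lra|]. intros; lia.
  - destruct IHJ as [d1 [Hd1 H1]]. { intros j Hj. apply H. lia. }
    destruct (H J) as [d2 [Hd2 H2]]; [lia|].
    exists (Rmin d1 d2). split. { apply Rmin_pos; auto. }
    intros j Hj s Hs Hst.
    assert (Rmin d1 d2 <= d1) by apply Rmin_l.
    assert (Rmin d1 d2 <= d2) by apply Rmin_r.
    destruct (Nat.eq_dec j J) as [->|Hne].
    + apply H2; auto; lra.
    + apply H1; auto; [lia|lra].
Qed.

Lemma term_cont (g : R -> nat -> C) (f : C -> R) t k :
  good g -> (forall z, continuous f z) -> 0 <= t <= 1 ->
  forall eta, 0 < eta -> exists d, 0 < d /\ forall s, 0 <= s <= 1 -> Rabs (s - t) < d ->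
    Rabs (f (g s k) - f (g t k)) < eta.
Proof.
  intros [_ [_ Hc]] Hf Ht eta Heta.
  specialize (Hf (g t k)).
  destruct (proj1 (filterlim_locally f (f (g t k))) Hf (mkposreal _ Heta)) as [d1 Hd1].
  destruct (Hc k t Ht d1 (cond_pos d1)) as [d [Hd H]].
  exists d; split; auto. intros s Hs Hst.
  apply (Hd1 (g s k)). apply C_NormedModule_mixin_compat1. apply H; auto.
Qed.

Lemma finsum_cont (g : R -> nat -> C) (f : C -> R) t :
  good g -> (forall z, continuous f z) -> 0 <= t <= 1 ->
  forall N eta, 0 < eta -> exists d, 0 < d /\ forall s, 0 <= s <= 1 -> Rabs (s - t) < d ->
    Rabs (sum_f_R0 (fun k => f (g s k)) N - sum_f_R0 (fun k => f (g t k)) N) < eta.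
Proof.
  intros Hg Hf Ht N. induction N; intros eta Heta.
  - simpl. apply term_cont; auto.
  - destruct (IHN (eta/2)) as [d1 [Hd1 H1]]; [lra|].
    destruct (term_cont g f t (S N) Hg Hf Ht (eta/2)) as [d2 [Hd2 H2]]; [lra|].
    exists (Rmin d1 d2). split. { apply Rmin_pos; auto. }
    intros s Hs Hst.
    assert (Rmin d1 d2 <= d1) by apply Rmin_l.
    assert (Rmin d1 d2 <= d2) by apply Rmin_r.
    simpl.
    specialize (H1 s Hs ltac:(lra)). specialize (H2 s Hs ltac:(lra)).
    apply Rabs_def2 in H1. apply Rabs_def2 in H2. apply Rabs_def1; lra.
Qed.

Lemma sum_conf_cont (g : R -> nat -> C) (f : C -> R) t :
  good g -> Cc f -> 0 <= t <= 1 ->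
  forall eta, 0 < eta -> exists d, 0 < d /\ forall s, 0 <= s <= 1 -> Rabs (s - t) < d ->
    Rabs (sum_conf f (g s) - sum_conf f (g t)) < eta.
Proof.
  intros Hg [Hf [M HM]] Ht eta Heta.
  destruct (proj1 (proj2 Hg) M) as [N HN].
  assert (E : forall s, 0 <= s <= 1 -> sum_conf f (g s) = sum_f_R0 (fun k => f (g s k)) N).
  { intros s Hs. unfold sum_conf. apply Series_fin. intros k Hk.
    apply HM. apply (HN s Hs). lia. }
  destruct (finsum_cont g f t Hg Hf Ht N eta Heta) as [d [Hd H]].
  exists d; split; auto. intros s Hs Hst.
  rewrite (E s Hs), (E t Ht). apply H; auto.
Qed.

Lemma good_dSigma (phi : nat -> C -> R) (g : R -> nat -> C) :
  (forall j, Cc (phi j)) -> good g ->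
  forall t, 0 <= t <= 1 -> forall eps, 0 < eps ->
    exists delta, 0 < delta /\ forall s, 0 <= s <= 1 -> Rabs (s - t) < delta ->
      d_Sigma phi (g s) (g t) < eps.
Proof.
  intros Hphi Hg t Ht eps Heps.
  destruct (pow_lt_1_zero (/2) ltac:(rewrite Rabs_pos_eq; lra) (eps/4) ltac:(lra)) as [J HJ].
  specialize (HJ J (Nat.le_refl _)). rewrite Rabs_pos_eq in HJ by (left; apply pow_half_pos).
  set (e := eps / 4).
  destruct (finite_delta t J (fun j s => Cmod (Cminus (g s j) (g t j)) < e)) as [d1 [Hd1 H1]].
  { intros j _. apply (proj2 (proj2 Hg)); auto. unfold e; lra. }
  destruct (finite_delta t J (fun j s => Rabs (sum_conf (phi j) (g s) - sum_conf (phi j) (g t)) < e)) as [d2 [Hd2 H2]].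
  { intros j _. apply sum_conf_cont; auto. unfold e; lra. }
  exists (Rmin d1 d2). split. { apply Rmin_pos; auto. }
  intros s Hs Hst.
  assert (Rmin d1 d2 <= d1) by apply Rmin_l.
  assert (Rmin d1 d2 <= d2) by apply Rmin_r.
  unfold d_Sigma, d_V.
  assert (A : Series (fun j => (/2) ^ (S j) * Rmin (Cmod (Cminus (g s j) (g t j))) 1) <= e + (/2)^J).
  { apply series_small. unfold e; lra.
    - intros n. assert (0 <= Rmin (Cmod (Cminus (g s n) (g t n))) 1 <= 1).
      { split. apply Rmin_glb; [apply Cmod_ge_0|lra]. apply Rmin_r. }
      assert (0 < (/2)^(S n)) by apply pow_half_pos.
      split; [apply Rmult_le_pos; lra|]. rewrite <- (Rmult_1_r ((/2)^(S n))) at 2.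
      apply Rmult_le_compat_l; lra.
    - intros n Hn. apply Rmult_le_compat_l. left; apply pow_half_pos.
      specialize (H1 n Hn s Hs ltac:(lra)). simpl in H1.
      assert (Rmin (Cmod (Cminus (g s n) (g t n))) 1 <= Cmod (Cminus (g s n) (g t n))) by apply Rmin_l.
      lra. }
  assert (B : Series (fun j => (/2) ^ (S j) *
      (Rabs (sum_conf (phi j) (g s) - sum_conf (phi j) (g t)) /
       (1 + Rabs (sum_conf (phi j) (g s) - sum_conf (phi j) (g t))))) <= e + (/2)^J).
  { apply series_small. unfold e; lra.
    - intros n. set (u := Rabs (sum_conf (phi n) (g s) - sum_conf (phi n) (g t))).
      assert (0 <= u) by apply Rabs_pos.
      assert (0 <= u / (1 + u) <= 1).
      { split. apply Rdiv_le_0_compat; lra.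
        apply (Rmult_le_reg_r (1+u)); [lra|]. unfold Rdiv. rewrite Rmult_assoc, Rinv_l; lra. }
      assert (0 < (/2)^(S n)) by apply pow_half_pos.
      split; [apply Rmult_le_pos; lra|]. rewrite <- (Rmult_1_r ((/2)^(S n))) at 2.
      apply Rmult_le_compat_l; lra.
    - intros n Hn. apply Rmult_le_compat_l. left; apply pow_half_pos.
      specialize (H2 n Hn s Hs ltac:(lra)). simpl in H2.
      set (u := Rabs (sum_conf (phi n) (g s) - sum_conf (phi n) (g t))) in *.
      assert (0 <= u) by apply Rabs_pos.
      assert (u / (1 + u) <= u).
      { apply (Rmult_le_reg_r (1+u)); [lra|]. unfold Rdiv. rewrite Rmult_assoc, Rinv_l by lra. nra. }
      lra. }
  unfold e in *. lra.
Qed.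

Definition concat (g1 g2 : R -> nat -> C) (t : R) : nat -> C :=
  if Rle_dec t (1/2) then g1 (2*t) else g2 (2*t-1).
Definition rev (g : R -> nat -> C) (t : R) : nat -> C := g (1 - t).

Lemma good_rev g : good g -> good (rev g).
Proof.
  intros [Ha [Hb Hc]]. unfold rev. split; [|split].
  - intros t Ht. apply Ha. lra.
  - intros M. destruct (Hb M) as [N HN]. exists N. intros t Ht. apply HN. lra.
  - intros k t Ht eps Heps. destruct (Hc k (1-t) ltac:(lra) eps Heps) as [d [Hd H]].
    exists d; split; auto. intros s Hs Hst. apply H. lra.
    replace (1 - s - (1 - t)) with (- (s - t)) by ring. rewrite Rabs_Ropp. auto.
Qed.

Lemma good_concat g1 g2 : good g1 -> good g2 -> (forall k, g1 1 k = g2 0 k) ->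
  good (concat g1 g2).
Proof.
  intros [Ha1 [Hb1 Hc1]] [Ha2 [Hb2 Hc2]] E. unfold concat. split; [|split].
  - intros t Ht. destruct (Rle_dec t (1/2)).
    + apply Ha1. lra.
    + apply Ha2. lra.
  - intros M. destruct (Hb1 M) as [N1 HN1]. destruct (Hb2 M) as [N2 HN2].
    exists (max N1 N2). intros t Ht k Hk. destruct (Rle_dec t (1/2)).
    + apply HN1. lra. lia.
    + apply HN2. lra. lia.
  - intros k t Ht eps Heps.
    destruct (Rtotal_order t (1/2)) as [Hlt|[Heq|Hgt]].
    + destruct (Hc1 k (2*t) ltac:(lra) eps Heps) as [d [Hd H]].
      exists (Rmin (d/2) (1/2 - t)). split. { apply Rmin_pos; lra. }
      intros s Hs Hst.
      assert (Rmin (d/2) (1/2-t) <= d/2) by apply Rmin_l.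
      assert (Rmin (d/2) (1/2-t) <= 1/2 - t) by apply Rmin_r.
      apply Rabs_def2 in Hst.
      destruct (Rle_dec s (1/2)); [|lra]. destruct (Rle_dec t (1/2)); [|lra].
      apply H. lra. apply Rabs_def1; lra.
    + subst t.
      destruct (Hc1 k 1 ltac:(lra) eps Heps) as [d1 [Hd1 H1]].
      destruct (Hc2 k 0 ltac:(lra) eps Heps) as [d2 [Hd2 H2]].
      exists (Rmin (d1/2) (d2/2)). split. { apply Rmin_pos; lra. }
      intros s Hs Hst.
      assert (Rmin (d1/2) (d2/2) <= d1/2) by apply Rmin_l.
      assert (Rmin (d1/2) (d2/2) <= d2/2) by apply Rmin_r.
      apply Rabs_def2 in Hst.
      destruct (Rle_dec (1/2) (1/2)); [|lra].
      replace (2 * (1/2)) with 1 by field.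
      destruct (Rle_dec s (1/2)).
      * apply H1. lra. apply Rabs_def1; lra.
      * rewrite E. apply H2. lra. apply Rabs_def1; lra.
    + destruct (Hc2 k (2*t-1) ltac:(lra) eps Heps) as [d [Hd H]].
      exists (Rmin (d/2) (t - 1/2)). split. { apply Rmin_pos; lra. }
      intros s Hs Hst.
      assert (Rmin (d/2) (t-1/2) <= d/2) by apply Rmin_l.
      assert (Rmin (d/2) (t-1/2) <= t - 1/2) by apply Rmin_r.
      apply Rabs_def2 in Hst.
      destruct (Rle_dec s (1/2)); [lra|]. destruct (Rle_dec t (1/2)); [lra|].
      apply H. lra. apply Rabs_def1; lra.
Qed.

Lemma concat_0 g1 g2 : concat g1 g2 0 = g1 0.
Proof. unfold concat. destruct (Rle_dec 0 (1/2)); [|lra]. f_equal; ring. Qed.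
Lemma concat_1 g1 g2 : concat g1 g2 1 = g2 1.
Proof. unfold concat. destruct (Rle_dec 1 (1/2)); [lra|]. f_equal; ring. Qed.
Lemma rev_0 g : rev g 0 = g 1.
Proof. unfold rev. f_equal; ring. Qed.
Lemma rev_1 g : rev g 1 = g 0.
Proof. unfold rev. f_equal; ring. Qed.

Lemma good_path phi (Hphi : vague_seq phi) (g : R -> nat -> C) x y :
  good g -> g 0 = x -> g 1 = y ->
  exists gamma : R -> nat -> C,
      (forall t : R, 0 <= t <= 1 -> Conf_lf (gamma t)) /\
      gamma 0 = x /\ gamma 1 = y /\
      (forall t : R, 0 <= t <= 1 -> forall eps : R, 0 < eps ->
         exists delta : R, 0 < delta /\
           forall s : R, 0 <= s <= 1 -> Rabs (s - t) < delta ->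
             d_Sigma phi (gamma s) (gamma t) < eps).
Proof.
  intros Hg H0 H1. exists g. split; [|split; [|split]]; auto.
  - intros t Ht. destruct Hg as [Ha [Hb _]]. split.
    + apply Ha; auto.
    + intros Rr HR. destruct (Hb Rr) as [N HN]. exists N. intros j Hj.
      destruct (le_lt_dec N j) as [Hle|Hlt]; auto.
      specialize (HN t Ht j Hle). lra.
  - apply good_dSigma; auto. apply Hphi.
Qed.

Fixpoint itv (u : nat -> R) (n : nat) : R * R :=
  match n with
  | O => (0, 1)
  | S n => let p := itv u n in
      if Rlt_dec (u n) ((fst p + snd p)/2)
      then (fst p + 2*(snd p - fst p)/3, snd p)
      else (fst p, fst p + (snd p - fst p)/3)
  end.

Lemma itv_step u n :
  fst (itv u n) < snd (itv u n) ->
  fst (itv u n) <= fst (itv u (S n)) /\ snd (itv u (S n)) <= snd (itv u n) /\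
  fst (itv u (S n)) < snd (itv u (S n)) /\ (u n < fst (itv u (S n)) \/ snd (itv u (S n)) < u n).
Proof.
  intros H. simpl. destruct (Rlt_dec (u n) ((fst (itv u n) + snd (itv u n))/2)); simpl; lra.
Qed.

Lemma itv_lt u n : fst (itv u n) < snd (itv u n).
Proof. induction n. simpl; lra. apply itv_step in IHn. tauto. Qed.

Lemma itv_mono u n m : (n <= m)%nat -> fst (itv u n) <= fst (itv u m) /\ snd (itv u m) <= snd (itv u n).
Proof.
  induction 1. lra.
  destruct (itv_step u m (itv_lt u m)) as [A [B _]]. lra.
Qed.

Lemma itv_ab u n m : fst (itv u n) <= snd (itv u m).
Proof.
  destruct (itv_mono u n (max n m)) as [A _]; [lia|].
  destruct (itv_mono u m (max n m)) as [_ B]; [lia|].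
  assert (C := itv_lt u (max n m)). lra.
Qed.

Lemma avoid (u : nat -> R) : exists r, forall n, r <> u n.
Proof.
  set (E := fun x => exists n, x = fst (itv u n)).
  destruct (completeness E) as [r [Hub Hlub]].
  - exists 1. intros x [n ->]. apply (itv_ab u n 0).
  - exists 0. exists O. reflexivity.
  - exists r. intros n Heq.
    assert (A : fst (itv u (S n)) <= r) by (apply Hub; exists (S n); reflexivity).
    assert (B : r <= snd (itv u (S n))).
    { apply Hlub. intros x [m ->]. apply itv_ab. }
    destruct (itv_step u n (itv_lt u n)) as [_ [_ [_ C]]]. lra.
Qed.

Lemma avoid2 (u v : nat -> nat -> R) : exists r, forall k l, r <> u k l /\ r <> v k l.
Proof.
  set (w := fun n => let (p, q) := of_nat n in let (k, l) := of_nat p in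
                     match q with O => u k l | _ => v k l end).
  destruct (avoid w) as [r Hr]. exists r. intros k l. split.
  - intros E. apply (Hr (to_nat (to_nat (k, l), O))). unfold w.
    rewrite cancel_of_to, cancel_of_to. exact E.
  - intros E. apply (Hr (to_nat (to_nat (k, l), 1%nat))). unfold w.
    rewrite cancel_of_to, cancel_of_to. exact E.
Qed.

Lemma avoid1 (u : nat -> nat -> R) : exists r, forall k l, r <> u k l.
Proof. destruct (avoid2 u u) as [r H]. exists r. intros k l. apply H. Qed.

Definition lin2 (p q : C) (t : R) : C :=
  (fst p + t * (fst q - fst p), snd p + t * (snd q - snd p)).

Lemma lin2_0 p q : lin2 p q 0 = p.
Proof. destruct p; unfold lin2; simpl; f_equal; ring. Qed.
Lemma lin2_1 p q : lin2 p q 1 = q.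
Proof. destruct q; unfold lin2; simpl; f_equal; ring. Qed.
Lemma lin2_C p q t : lin2 p q t = Cplus p (Cmult (RtoC t) (Cminus q p)).
Proof. destruct p, q; cbv [lin2 RtoC Cplus Cmult Cminus Copp fst snd]; f_equal; ring. Qed.

Lemma sq_le_Cmod m z : 0 <= m -> m^2 <= fst z ^ 2 + snd z ^ 2 -> m <= Cmod z.
Proof. intros H1 H2. unfold Cmod. rewrite <- (sqrt_pow2 m H1). apply sqrt_le_1_alt. exact H2. Qed.
Lemma Cmod_le_sq m z : 0 <= m -> fst z ^ 2 + snd z ^ 2 <= m^2 -> Cmod z <= m.
Proof. intros H1 H2. unfold Cmod. rewrite <- (sqrt_pow2 m H1). apply sqrt_le_1_alt. exact H2. Qed.

Lemma lin2_diff p q s t : Cmod (Cminus (lin2 p q s) (lin2 p q t)) = Rabs (s - t) * Cmod (Cminus q p).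
Proof.
  rewrite <- Cmod_R, <- Cmod_mult. f_equal.
  destruct p, q; cbv [lin2 RtoC Cplus Cmult Cminus Copp fst snd]; f_equal; ring.
Qed.

Lemma good_lin2 (p q : nat -> C) :
  (forall t, 0 <= t <= 1 -> forall i j, lin2 (p i) (q i) t = lin2 (p j) (q j) t -> i = j) ->
  (forall M, exists N, forall t, 0 <= t <= 1 -> forall k, (N <= k)%nat -> M < Cmod (lin2 (p k) (q k) t)) ->
  good (fun t k => lin2 (p k) (q k) t).
Proof.
  intros Ha Hb. split; [exact Ha|split; [exact Hb|]].
  intros k t Ht eps Heps.
  set (m := Cmod (Cminus (q k) (p k))).
  assert (Hm : 0 <= m) by apply Cmod_ge_0.
  exists (eps / (m + 1)). split. { apply Rdiv_lt_0_compat; lra. }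
  intros s Hs Hst. rewrite lin2_diff. fold m.
  assert (Rabs (s - t) * (m+1) < eps).
  { apply (Rmult_lt_compat_r (m+1)) in Hst; [|lra].
    unfold Rdiv in Hst. rewrite Rmult_assoc, Rinv_l in Hst; lra. }
  assert (0 <= Rabs (s-t)) by apply Rabs_pos. nra.
Qed.

Definition shells (T : nat -> R) : Prop :=
  (forall k, 0 < T k) /\ (forall k, 4 * T k < T (S k)) /\ (forall k, INR k <= T k).

Lemma shells_mono T : shells T -> forall k l, (k < l)%nat -> 4 * T k < T l.
Proof.
  intros [H0 [H1 _]] k l Hkl. induction Hkl.
  - apply H1.
  - specialize (H1 m). specialize (H0 m). lra.
Qed.

Lemma shell_ab (T : nat -> R) (g : R -> nat -> C) :
  shells T ->
  (forall t, 0 <= t <= 1 -> forall k, T k / 4 <= Cmod (g t k) <= T k) ->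
  (forall t, 0 <= t <= 1 -> forall i j, g t i = g t j -> i = j) /\
  (forall M, exists N, forall t, 0 <= t <= 1 -> forall k, (N <= k)%nat -> M < Cmod (g t k)).
Proof.
  intros HT Hg. split.
  - intros t Ht i j E.
    destruct (lt_eq_lt_dec i j) as [[Hlt|Heq]|Hgt]; auto.
    + assert (A := shells_mono T HT i j Hlt). assert (B := Hg t Ht i). assert (C := Hg t Ht j).
      rewrite E in B. lra.
    + assert (A := shells_mono T HT j i Hgt). assert (B := Hg t Ht i). assert (C := Hg t Ht j).
      rewrite E in B. lra.
  - intros M. destruct (INR_archimed 1 (4 * M)) as [N HN]; [lra|].
    exists N. intros t Ht k Hk. assert (B := Hg t Ht k).
    destruct HT as [_ [_ H3]]. specialize (H3 k).
    apply le_INR in Hk. lra.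
Qed.

Ltac fsolve := field; repeat match goal with |- _ /\ _ => split | |- _ <> _ => intro; nra end.

Definition wv (x : nat -> C) k : C := if Ceq_dec (x k) 0 then RtoC 1 else x k.
Definition ev (x : nat -> C) k : R := if Ceq_dec (x k) 0 then 0 else 1.
Definition Rk x (T : nat -> R) k := T k / Cmod (wv x k) - ev x k.
Definition cdir (h : R) : C := (1/(1+Rabs h), h/(1+Rabs h)).
Definition vv x T h k : C := Cmult (RtoC (Rk x T k)) (Cmult (cdir h) (wv x k)).
Definition av x T h k : C := Cplus (x k) (vv x T h k).
Definition S1 x T h (t : R) k := lin2 (x k) (av x T h k) t.
Definition bad x T k l : R :=
  let D := Cminus (Cmult (RtoC (Rk x T l)) (wv x l)) (Cmult (RtoC (Rk x T k)) (wv x k)) in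
  let W := Cdiv (Cminus (x k) (x l)) D in Im W / Re W.

Lemma xw x k : x k = Cmult (RtoC (ev x k)) (wv x k).
Proof.
  unfold ev, wv. destruct (Ceq_dec (x k) 0) as [E|E].
  - rewrite E. cbv [RtoC Cmult fst snd]. f_equal; ring.
  - destruct (x k). cbv [RtoC Cmult fst snd]. f_equal; ring.
Qed.

Lemma ev01 x k : ev x k = 0 \/ ev x k = 1.
Proof. unfold ev. destruct (Ceq_dec (x k) 0); auto. Qed.

Lemma wpos x k : 0 < Cmod (wv x k).
Proof.
  unfold wv. destruct (Ceq_dec (x k) 0) as [E|E].
  - rewrite Cmod_1. lra.
  - apply Cmod_gt_0. exact E.
Qed.

Lemma xmod x k : Cmod (x k) = ev x k * Cmod (wv x k).
Proof.
  rewrite (xw x k) at 1. rewrite Cmod_mult, Cmod_R.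
  destruct (ev01 x k) as [E|E]; rewrite E; [rewrite Rabs_R0|rewrite Rabs_R1]; reflexivity.
Qed.

Lemma Rk_props x T k : Cmod (x k) + 1 <= T k ->
  0 <= Rk x T k /\ Cmod (wv x k) * (ev x k + Rk x T k) = T k.
Proof.
  intros H. assert (Hw := wpos x k). assert (Hx := xmod x k).
  unfold Rk. split.
  - destruct (ev01 x k) as [E|E]; rewrite E in *.
    + assert (0 < T k) by (assert (0 <= Cmod (x k)) by apply Cmod_ge_0; lra).
      assert (0 < T k / Cmod (wv x k)) by (apply Rdiv_lt_0_compat; lra). lra.
    + assert (1 < T k / Cmod (wv x k)); [|lra].
      apply (Rmult_lt_reg_r (Cmod (wv x k))); auto. unfold Rdiv.
      rewrite Rmult_assoc, Rinv_l by lra. lra.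
  - fsolve.
Qed.

Lemma S1_form x T h t k :
  S1 x T h t k = Cmult (wv x k) (Cplus (RtoC (ev x k)) (Cmult (RtoC (t * Rk x T k)) (cdir h))).
Proof.
  unfold S1, av, vv. rewrite (xw x k).
  destruct (wv x k), (cdir h). cbv [lin2 RtoC Cplus Cmult Cminus Copp fst snd]. f_equal; ring.
Qed.

Lemma cdir_props h : 0 < fst (cdir h) <= 1 /\
  1/2 <= fst (cdir h) ^ 2 + snd (cdir h) ^ 2 <= 1.
Proof.
  unfold cdir; cbn [fst snd]. assert (0 <= Rabs h) by apply Rabs_pos.
  assert (E : h * h = Rabs h * Rabs h) by (rewrite <- Rabs_mult; rewrite Rabs_pos_eq; [auto|nra]).
  split. split. apply Rdiv_lt_0_compat; lra.
  assert (1/(1+Rabs h) * (1 + Rabs h) = 1) by fsolve.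
  apply (Rmult_le_reg_r (1 + Rabs h)); [lra|]. lra.
  replace ((1 / (1 + Rabs h)) ^ 2 + (h / (1 + Rabs h)) ^ 2) with ((1 + h*h) / ((1 + Rabs h)*(1 + Rabs h))) by fsolve.
  assert (0 < (1 + Rabs h) * (1 + Rabs h)) by nra.
  split.
  - assert (HH : (1 + h*h) / ((1 + Rabs h)*(1 + Rabs h)) * ((1 + Rabs h)*(1 + Rabs h)) = 1 + h * h) by fsolve.
    apply (Rmult_le_reg_r ((1 + Rabs h)*(1 + Rabs h))); auto.
    rewrite HH, E. pose proof (Rle_0_sqr (Rabs h - 1)) as Q; unfold Rsqr in Q. nra.
  - assert (H1 : (1 + h*h) / ((1 + Rabs h)*(1 + Rabs h)) * ((1 + Rabs h)*(1 + Rabs h)) = 1 + h * h) by fsolve.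
    apply (Rmult_le_reg_r ((1 + Rabs h)*(1 + Rabs h))); auto.
    rewrite H1, E. nra.
Qed.

Lemma mod_bounds h e s : (e = 0 \/ e = 1) -> 0 <= s ->
  e <= Cmod (Cplus (RtoC e) (Cmult (RtoC s) (cdir h))) /\
  (e + s) / 2 <= Cmod (Cplus (RtoC e) (Cmult (RtoC s) (cdir h))) <= e + s.
Proof.
  intros He Hs. destruct (cdir_props h) as [[H1 H2] [H3 H4]].
  destruct (cdir h) as [c1 c2]. cbn [fst snd] in *.
  assert (F : fst (Cplus (RtoC e) (Cmult (RtoC s) (c1, c2))) = e + s * c1)
    by (cbv [RtoC Cplus Cmult fst snd]; ring).
  assert (G : snd (Cplus (RtoC e) (Cmult (RtoC s) (c1, c2))) = s * c2)
    by (cbv [RtoC Cplus Cmult fst snd]; ring).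
  assert (HA : 0 <= s * c1) by nra.
  assert (HA2 : s * c1 <= s) by nra.
  assert (Q : (s*c1)^2 + (s*c2)^2 = s^2 * (c1^2 + c2^2)) by ring.
  assert (Q1 : s^2 * (1/2) <= s^2 * (c1^2 + c2^2)) by (apply Rmult_le_compat_l; nra).
  assert (Q2 : s^2 * (c1^2 + c2^2) <= s^2 * 1) by (apply Rmult_le_compat_l; nra).
  split; [|split].
  - apply sq_le_Cmod. destruct He; lra. rewrite F, G.
    destruct He; subst; nra.
  - apply sq_le_Cmod. destruct He; lra. rewrite F, G.
    destruct He; subst; nra.
  - apply Cmod_le_sq. destruct He; lra. rewrite F, G.
    destruct He; subst; nra.
Qed.

Lemma S1_lower x T h t k : Cmod (x k) + 1 <= T k -> 0 <= t <= 1 ->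
  Cmod (x k) <= Cmod (S1 x T h t k).
Proof.
  intros HT Ht. destruct (Rk_props x T k HT) as [HR _].
  rewrite S1_form, Cmod_mult, xmod.
  destruct (mod_bounds h (ev x k) (t * Rk x T k) (ev01 x k)) as [A _]. nra.
  assert (Hw := wpos x k). nra.
Qed.

Lemma av_mod x T h k : Cmod (x k) + 1 <= T k ->
  T k / 2 <= Cmod (av x T h k) <= T k.
Proof.
  intros HT. destruct (Rk_props x T k HT) as [HR HE].
  replace (av x T h k) with (S1 x T h 1 k) by (unfold S1; apply lin2_1).
  rewrite S1_form, Cmod_mult. rewrite Rmult_1_l.
  destruct (mod_bounds h (ev x k) (Rk x T k) (ev01 x k)) as [_ [A B]]; auto.
  assert (Hw := wpos x k). split; nra.
Qed.

Lemma S1_inj x T h : (forall i j, x i = x j -> i = j) -> (forall k l, h <> bad x T k l) ->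
  forall t, 0 <= t <= 1 -> forall i j, S1 x T h t i = S1 x T h t j -> i = j.
Proof.
  intros Hx Hh t Ht i j E.
  destruct (Nat.eq_dec i j) as [|Hne]; auto. exfalso.
  set (D := Cminus (Cmult (RtoC (Rk x T j)) (wv x j)) (Cmult (RtoC (Rk x T i)) (wv x i))).
  assert (K : Cminus (x i) (x j) = Cmult (Cmult (RtoC t) (cdir h)) D).
  { unfold S1, av, vv in E. rewrite !lin2_C in E. unfold D.
    destruct (x i) as [a1 a2], (x j) as [b1 b2], (wv x i) as [u1 u2], (wv x j) as [v1 v2], (cdir h) as [c1 c2].
    revert E. cbv [RtoC Cplus Cmult Cminus Copp fst snd]. intros E. injection E. intros E2 E1.
    f_equal; lra. }
  assert (Hxne : x i <> x j) by (intros F; apply Hne, Hx, F).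
  assert (Hsub : Cminus (x i) (x j) <> 0).
  { intros F. apply Hxne. destruct (x i), (x j). revert F. cbv [Cminus Cplus Copp RtoC fst snd].
    intros F. injection F. intros. f_equal; lra. }
  assert (Ht0 : t <> 0).
  { intros ->. apply Hsub. rewrite K. destruct (cdir h), D. cbv [Cmult RtoC fst snd]. f_equal; ring. }
  assert (HD : D <> 0).
  { intros F. apply Hsub. rewrite K, F. destruct (cdir h). cbv [Cmult RtoC fst snd]. f_equal; ring. }
  assert (W : Cdiv (Cminus (x i) (x j)) D = Cmult (RtoC t) (cdir h)).
  { rewrite K. field. exact HD. }
  apply (Hh i j). unfold bad. fold D. rewrite W.
  assert (Hq : 0 < 1 + Rabs h) by (assert (0 <= Rabs h) by apply Rabs_pos; lra).
  unfold cdir. cbv [Cmult RtoC Re Im fst snd].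
  field. split; [intro; lra | exact Ht0].
Qed.

Definition sg (a : C) : R := if Rle_dec 0 (snd a) then 1 else -1.
Definition bpt (a : C) : C := (0, sg a * Cmod a).
Definition ept (a : C) : C := (Cmod a, 0).
Definition S2a (a : nat -> C) t k := lin2 (a k) (bpt (a k)) t.
Definition S2b (a : nat -> C) t k := lin2 (bpt (a k)) (ept (a k)) t.
Definition S3 (a a' : nat -> C) t k := lin2 (ept (a k)) (ept (a' k)) t.

Lemma sq_mod (a : C) : fst a ^ 2 + snd a ^ 2 = Cmod a ^ 2.
Proof. rewrite Cmod2_alt. reflexivity. Qed.

Lemma snd_le (a : C) : Rabs (snd a) <= Cmod a.
Proof.
  rewrite <- sqrt_Rsqr_abs. unfold Cmod. apply sqrt_le_1_alt. unfold Rsqr.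
  destruct a as [a1 a2]; cbn [fst snd]. nra.
Qed.

Lemma M2a (a : C) t : 0 <= t <= 1 ->
  Cmod a / 2 <= Cmod (lin2 a (bpt a) t) <= Cmod a.
Proof.
  intros Ht. assert (Hs := sq_mod a). assert (Hr := Cmod_ge_0 a). assert (Hb := snd_le a).
  set (r := Cmod a) in *. destruct a as [a1 a2]. cbn [fst snd] in *.
  assert (Hsg : 0 <= sg (a1, a2) * a2 <= r /\ sg (a1,a2) * sg (a1,a2) = 1).
  { unfold sg; cbn [snd]. destruct (Rle_dec 0 a2).
    - rewrite Rabs_pos_eq in Hb; lra.
    - rewrite Rabs_left in Hb; lra. }
  destruct Hsg as [[S1 S2] S3].
  unfold lin2, bpt; fold r; cbn [fst snd].
  set (s := sg (a1, a2)) in *.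
  assert (Q : (a1 + t * (0 - a1)) ^ 2 + (a2 + t * (s * r - a2)) ^ 2 =
      (1-t)^2 * (a1^2 + a2^2) + 2*t*(1-t) * (s * a2) * r + t^2 * (s*s) * r^2) by ring.
  rewrite S3, Hs in Q.
  assert (0 <= t * (1-t)) by nra.
  assert (0 <= t * (1-t) * (s*a2) * r) by (apply Rmult_le_pos; [apply Rmult_le_pos|]; lra).
  assert (t * (1-t) * (s*a2) * r <= t * (1-t) * r * r).
  { apply Rmult_le_compat_r; auto. apply Rmult_le_compat_l; lra. }
  assert (B : 0 <= r^2 * ((2*t-1)^2)) by (apply Rmult_le_pos; apply pow2_ge_0).
  split.
  - apply sq_le_Cmod. lra. cbn [fst snd]. rewrite Q. lra.
  - apply Cmod_le_sq. lra. cbn [fst snd]. rewrite Q. lra.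
Qed.

Lemma M2b (a : C) t : 0 <= t <= 1 ->
  Cmod a / 2 <= Cmod (lin2 (bpt a) (ept a) t) <= Cmod a.
Proof.
  intros Ht. assert (Hr := Cmod_ge_0 a).
  assert (S3 : sg a * sg a = 1) by (unfold sg; destruct (Rle_dec 0 (snd a)); lra).
  unfold lin2, bpt, ept; cbn [fst snd].
  set (r := Cmod a) in *. set (s := sg a) in *.
  assert (Q : (0 + t * (r - 0)) ^ 2 + (s * r + t * (0 - s * r)) ^ 2 = (t^2 + (1-t)^2 * (s*s)) * r^2) by ring.
  rewrite S3 in Q.
  assert (B : 0 <= r^2 * ((2*t-1)^2)) by (apply Rmult_le_pos; apply pow2_ge_0).
  assert (B2 : 0 <= r^2 * (t * (1-t))) by (apply Rmult_le_pos; [apply pow2_ge_0|nra]).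
  split.
  - apply sq_le_Cmod. lra. cbn [fst snd]. rewrite Q. lra.
  - apply Cmod_le_sq. lra. cbn [fst snd]. rewrite Q. lra.
Qed.

Lemma M3 (a a' : C) (T : R) t : 0 <= t <= 1 ->
  T / 2 <= Cmod a <= T -> T / 2 <= Cmod a' <= T ->
  T / 2 <= Cmod (lin2 (ept a) (ept a') t) <= T.
Proof.
  intros Ht H1 H2. unfold lin2, ept; cbn [fst snd].
  assert (A1 : (1-t) * (T/2) <= (1-t) * Cmod a) by (apply Rmult_le_compat_l; lra).
  assert (A2 : (1-t) * Cmod a <= (1-t) * T) by (apply Rmult_le_compat_l; lra).
  assert (A3 : t * (T/2) <= t * Cmod a') by (apply Rmult_le_compat_l; lra).
  assert (A4 : t * Cmod a' <= t * T) by (apply Rmult_le_compat_l; lra).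
  assert (HH : T/2 <= Cmod a + t * (Cmod a' - Cmod a) <= T) by lra.
  set (v := Cmod a + t * (Cmod a' - Cmod a)) in *.
  split.
  - apply sq_le_Cmod. lra. cbn [fst snd]. nra.
  - apply Cmod_le_sq. lra. cbn [fst snd]. nra.
Qed.

Lemma good_S2a T a : shells T -> (forall k, T k / 2 <= Cmod (a k) <= T k) -> good (S2a a).
Proof.
  intros HT Ha. unfold S2a. apply good_lin2; apply (shell_ab T (fun t k => lin2 (a k) (bpt (a k)) t) HT);
  intros t Ht k; specialize (Ha k); assert (H := M2a (a k) t Ht); lra.
Qed.

Lemma good_S2b T a : shells T -> (forall k, T k / 2 <= Cmod (a k) <= T k) -> good (S2b a).
Proof.
  intros HT Ha. unfold S2b. apply good_lin2; apply (shell_ab T (fun t k => lin2 (bpt (a k)) (ept (a k)) t) HT);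
  intros t Ht k; specialize (Ha k); assert (H := M2b (a k) t Ht); lra.
Qed.

Lemma good_S3 T a a' : shells T -> (forall k, T k / 2 <= Cmod (a k) <= T k) ->
  (forall k, T k / 2 <= Cmod (a' k) <= T k) -> good (S3 a a').
Proof.
  intros HT Ha Ha'. unfold S3. apply good_lin2; apply (shell_ab T (fun t k => lin2 (ept (a k)) (ept (a' k)) t) HT);
  intros t Ht k; specialize (Ha k); specialize (Ha' k); assert (H := M3 (a k) (a' k) (T k) t Ht Ha Ha'); lra.
Qed.

Lemma good_S1 x T h : Conf_lf x -> (forall k, Cmod (x k) + 1 <= T k) ->
  (forall k l, h <> bad x T k l) -> good (S1 x T h).
Proof.
  intros [Hx Hlf] HT Hh. unfold S1. apply good_lin2.
  - apply (S1_inj x T h Hx Hh).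
  - intros M. destruct (Hlf (Rmax M 1)) as [N HN]. { assert (1 <= Rmax M 1) by apply Rmax_r. lra. }
    exists N. intros t Ht k Hk.
    assert (A := S1_lower x T h t k (HT k) Ht). unfold S1 in A.
    assert (~ Cmod (x k) <= Rmax M 1) by (intro F; specialize (HN k F); lia).
    assert (M <= Rmax M 1) by apply Rmax_l. lra.
Qed.

Fixpoint Tq (x y : nat -> C) (n : nat) : R :=
  match n with
  | O => Cmod (x O) + Cmod (y O) + 1
  | S n => Cmod (x (S n)) + Cmod (y (S n)) + 4 * Tq x y n + 1
  end.

Lemma Tq_props x y : shells (Tq x y) /\ (forall k, Cmod (x k) + 1 <= Tq x y k) /\
  (forall k, Cmod (y k) + 1 <= Tq x y k).
Proof.
  assert (P : forall k, INR k + 1 <= Tq x y k).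
  { induction k; cbn [Tq].
    - rewrite INR_0. assert (0 <= Cmod (x O)) by apply Cmod_ge_0. assert (0 <= Cmod (y O)) by apply Cmod_ge_0. lra.
    - rewrite S_INR. assert (0 <= Cmod (x (S k))) by apply Cmod_ge_0.
      assert (0 <= Cmod (y (S k))) by apply Cmod_ge_0.
      assert (0 <= INR k) by apply pos_INR. lra. }
  split; [split; [|split]|split].
  - intros k. specialize (P k). assert (0 <= INR k) by apply pos_INR. lra.
  - intros k. simpl. assert (0 <= Cmod (x (S k))) by apply Cmod_ge_0.
    assert (0 <= Cmod (y (S k))) by apply Cmod_ge_0. lra.
  - intros k. specialize (P k). lra.
  - intros [|k]; simpl.
    + assert (0 <= Cmod (y O)) by apply Cmod_ge_0. lra.
    + assert (0 <= Cmod (y (S k))) by apply Cmod_ge_0. specialize (P k).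
      assert (0 <= INR k) by apply pos_INR. lra.
  - intros [|k]; simpl.
    + assert (0 <= Cmod (x O)) by apply Cmod_ge_0. lra.
    + assert (0 <= Cmod (x (S k))) by apply Cmod_ge_0. specialize (P k).
      assert (0 <= INR k) by apply pos_INR. lra.
Qed.

Definition hub x T h := concat (S1 x T h) (concat (S2a (av x T h)) (S2b (av x T h))).

Lemma good_hub x T h : Conf_lf x -> shells T -> (forall k, Cmod (x k) + 1 <= T k) ->
  (forall k l, h <> bad x T k l) -> good (hub x T h).
Proof.
  intros Hx HT Hxt Hh. unfold hub.
  assert (Ha : forall k, T k / 2 <= Cmod (av x T h k) <= T k) by (intros k; apply av_mod, Hxt).
  apply good_concat.
  - apply good_S1; auto.
  - apply good_concat.
    + apply (good_S2a T); auto.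
    + apply (good_S2b T); auto.
    + intros k. unfold S2a, S2b. rewrite lin2_1, lin2_0. reflexivity.
  - intros k. rewrite concat_0. unfold S1, S2a. rewrite lin2_1, lin2_0. reflexivity.
Qed.

Lemma hub_0 x T h : hub x T h 0 = x.
Proof. unfold hub. rewrite concat_0. apply functional_extensionality. intros k. unfold S1. apply lin2_0. Qed.

Lemma hub_1 x T h k : hub x T h 1 k = ept (av x T h k).
Proof. unfold hub. rewrite concat_1, concat_1. unfold S2b. apply lin2_1. Qed.

Theorem mainTheorem6 (phi : nat -> C -> R) (Hphi : vague_seq phi) :
  path_connected_Conf phi.
Proof.
  intros x y Hx Hy.
  destruct (Tq_props x y) as [HT [Hxt Hyt]].
  set (T := Tq x y) in *.
  destruct (avoid2 (bad x T) (bad y T)) as [h Hh].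
  set (g := concat (hub x T h) (concat (S3 (av x T h) (av y T h)) (rev (hub y T h)))).
  apply (good_path phi Hphi g x y).
  - unfold g. apply good_concat.
    + apply good_hub; [exact Hx|exact HT|exact Hxt|intros k l; apply (Hh k l)].
    + apply good_concat.
      * apply (good_S3 T); [exact HT|intros k; apply av_mod; auto|intros k; apply av_mod; auto].
      * apply good_rev. apply good_hub; [exact Hy|exact HT|exact Hyt|intros k l; apply (Hh k l)].
      * intros k. rewrite rev_0, hub_1. unfold S3. apply lin2_1.
    + intros k. rewrite hub_1, concat_0. unfold S3. rewrite lin2_0. reflexivity.
  - unfold g. rewrite concat_0. apply hub_0.
  - unfold g. rewrite concat_1, concat_1, rev_1. apply hub_0.
Qed.
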